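(* Let $M,N$ be weight sequences satisfying $m_k^{1/k}\to\infty$ and $n_k^{1/k}\to\infty$. Assume that there exists $C\ge1$ such that $\mu_j/j\le C\nu_k/k$ for all $1\le j\le k$. Then for all $t>0$, $\overline{\Gamma}_n(Ct)\le\underline{\Gamma}_m(t)$.
   Context: A weight sequence is given by an increasing sequence $1=\mu_0\le\mu_1\le\mu_2\le\cdots$ via $M_k=\mu_0\mu_1\cdots\mu_k=k!\,m_k$, with $M_k^{1/k}\to\infty$; analogously $\nu\leftrightarrow N\leftrightarrow n$. For a positive sequence $m$ with $m_0=1$ and $m_k^{1/k}\to\infty$ define $h_m(t)=\inf_{k\in\mathbb{N}}m_kt^k$ ($t>0$), $\overline{\Gamma}_m(t)=\min\{k: h_m(t)=m_kt^k\}$, and, if $m_{k+1}/m_k\to\infty$, $\underline{\Gamma}_m(t)=\min\{k: m_{k+1}/m_k\ge 1/t\}$. (Under the hypotheses, $m_{k+1}/m_k=\mu_{k+1}/(k+1)\to\infty$, so these are well defined.) *)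

(* Defs.v *)
From Stdlib Require Import Reals Lra Lia Arith Factorial Classical ClassicalEpsilon.
Open Scope R_scope.

Fixpoint Mseq (mu : nat -> R) (k : nat) : R :=
  match k with
  | O => mu O
  | S k' => Mseq mu k' * mu (S k')
  end.

Definition mseq (mu : nat -> R) (k : nat) : R := Mseq mu k / INR (fact k).

Definition root_to_infty (u : nat -> R) : Prop :=
  cv_infty (fun k => Rpower (u k) (/ INR k)).

Definition weight_sequence (mu : nat -> R) : Prop :=
  mu O = 1 /\ (forall k, mu k <= mu (S k)) /\ root_to_infty (Mseq mu).

Definition is_inf_seq (u : nat -> R) (l : R) : Prop :=
  (forall k, l <= u k) /\ (forall b, (forall k, b <= u k) -> b <= l).

Definition h_fun (m : nat -> R) (t : R) : R :=
  epsilon (inhabits 0) (fun l => is_inf_seq (fun k => m k * t ^ k) l).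

Definition Gamma_bar (m : nat -> R) (t : R) : nat :=
  epsilon (inhabits O)
    (fun k => h_fun m t = m k * t ^ k /\
              (forall j, h_fun m t = m j * t ^ j -> (k <= j)%nat)).

Definition Gamma_under (m : nat -> R) (t : R) : nat :=
  epsilon (inhabits O)
    (fun k => m (S k) / m k >= / t /\
              (forall j, m (S j) / m j >= / t -> (k <= j)%nat)).

(* Main.v *)
Require Import Defs.
From Stdlib Require Import Reals.
From Stdlib Require Import Lra Lia Classical ClassicalEpsilon Factorial Arith.
Open Scope R_scope.

Lemma mu_ge1 mu : weight_sequence mu -> forall k, 1 <= mu k.
Proof.
  intros [H0 [H1 _]] k. induction k. lra. specialize (H1 k). lra.
Qed.

Lemma Mseq_pos mu : weight_sequence mu -> forall k, 0 < Mseq mu k.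
Proof.
  intros W k. pose proof (mu_ge1 mu W). induction k; simpl.
  specialize (H 0%nat); lra. specialize (H (S k)). nra.
Qed.

Lemma mseq_pos mu : weight_sequence mu -> forall k, 0 < mseq mu k.
Proof.
  intros W k. unfold mseq. apply Rdiv_lt_0_compat. apply Mseq_pos; auto.
  apply lt_0_INR. apply lt_O_fact.
Qed.

Lemma mseq_ratio mu k : mseq mu (S k) = mseq mu k * (mu (S k) / INR (S k)).
Proof.
  unfold mseq. simpl Mseq. replace (fact (S k)) with (S k * fact k)%nat by reflexivity.
  rewrite mult_INR. pose proof (lt_O_fact k). assert (INR (fact k) <> 0) by (apply not_0_INR; lia).
  assert (INR (S k) <> 0) by (apply not_0_INR; lia). field. auto.
Qed.

Lemma min_exists (P : nat -> Prop) n : P n -> exists m, P m /\ forall j, P j -> (m <= j)%nat.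
Proof.
  revert P. induction n as [n IH] using lt_wf_ind. intros P Pn.
  destruct (classic (exists j, (j < n)%nat /\ P j)) as [[j [Hj Pj]]|Hn].
  - apply (IH j Hj P Pj).
  - exists n. split; auto. intros j Pj. destruct (Nat.lt_ge_cases j n); auto.
    exfalso; apply Hn; eauto.
Qed.

Lemma ratio_exists mu t : weight_sequence mu -> root_to_infty (mseq mu) -> 0 < t ->
  exists k, mu (S k) / INR (S k) >= / t.
Proof.
  intros W R Ht. apply NNPP. intro Hn.
  assert (Hlt : forall k, mu (S k) / INR (S k) < / t).
  { intro k. apply Rnot_ge_lt. intro; apply Hn; eauto. }
  assert (Hb : forall k, mseq mu k <= (/ t) ^ k).
  { induction k. unfold mseq; simpl. destruct W as [H0 _]. rewrite H0. lra.
    rewrite mseq_ratio. change ((/t)^(S k)) with (/t * (/t)^k). pose proof (mseq_pos mu W k).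
    specialize (Hlt k). pose proof (mu_ge1 mu W (S k)).
    assert (0 < mu (S k) / INR (S k)).
    { apply Rdiv_lt_0_compat. lra. apply lt_0_INR; lia. }
    rewrite Rmult_comm. apply Rmult_le_compat; lra. }
  destruct (R (/ t)) as [N HN]. specialize (HN (Nat.max N 1) ltac:(lia)).
  set (k := Nat.max N 1) in *.
  assert (Hk : 0 < INR k) by (apply lt_0_INR; lia).
  unfold Rpower in HN.
  pose proof (mseq_pos mu W k) as Hp.
  assert (Hit : 0 < / t) by (apply Rinv_0_lt_compat; lra).
  assert (Hl : ln (mseq mu k) <= INR k * ln (/ t)).
  { rewrite <- ln_pow by lra. destruct (Rle_lt_or_eq_dec _ _ (Hb k)) as [h|h].
    left. apply ln_increasing; auto. rewrite h; lra. }
  assert (Hl2 : / INR k * ln (mseq mu k) <= ln (/ t)).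
  { apply Rmult_le_reg_l with (INR k); auto. rewrite <- Rmult_assoc, Rinv_r by lra. lra. }
  destruct (Rle_lt_or_eq_dec _ _ Hl2) as [h|h].
  - apply exp_increasing in h. rewrite exp_ln in h by lra. lra.
  - rewrite h, exp_ln in HN by lra. lra.
Qed.

Theorem lemma3p3 (mu nu : nat -> R) (C : R) :
  weight_sequence mu -> weight_sequence nu ->
  root_to_infty (mseq mu) -> root_to_infty (mseq nu) ->
  1 <= C ->
  (forall j k : nat, (1 <= j)%nat -> (j <= k)%nat ->
     mu j / INR j <= C * (nu k / INR k)) ->
  forall t : R, 0 < t ->
    (Gamma_bar (mseq nu) (C * t) <= Gamma_under (mseq mu) t)%nat.
Proof.
  intros Wm Wn Rm Rn HC Hmn t Ht.
  assert (Hu : mseq mu (S (Gamma_under (mseq mu) t)) / mseq mu (Gamma_under (mseq mu) t) >= / t).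
  { unfold Gamma_under.
    match goal with |- context [epsilon ?i ?P] =>
      assert (HP : P (epsilon i P)); [apply epsilon_spec | destruct HP; auto] end.
    destruct (ratio_exists mu t Wm Rm Ht) as [k0 Hk0].
    apply (min_exists (fun k => mseq mu (S k) / mseq mu k >= / t) k0).
    rewrite mseq_ratio. pose proof (mseq_pos mu Wm k0).
    replace (mseq mu k0 * (mu (S k0) / INR (S k0)) / mseq mu k0) with (mu (S k0) / INR (S k0)) by (field; split; [apply not_0_INR; lia | lra]).
    auto. }
  set (k0 := Gamma_under (mseq mu) t) in *.
  rewrite mseq_ratio in Hu. pose proof (mseq_pos mu Wm k0).
  replace (mseq mu k0 * (mu (S k0) / INR (S k0)) / mseq mu k0) with (mu (S k0) / INR (S k0)) in Hu by (field; split; [apply not_0_INR; lia | lra]).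
  set (a := fun k => mseq nu k * (C * t) ^ k).
  assert (Hct : 0 < C * t) by nra.
  assert (apos : forall k, 0 < a k).
  { intro k. unfold a. apply Rmult_lt_0_compat. apply mseq_pos; auto. apply pow_lt; auto. }
  assert (Hmono : forall i, (k0 <= i)%nat -> a i <= a (S i)).
  { intros i Hi. unfold a. rewrite mseq_ratio. simpl pow.
    specialize (Hmn (S k0) (S i) ltac:(lia) ltac:(lia)).
    assert (Hq : 1 <= nu (S i) / INR (S i) * (C * t)).
    { assert (/ t <= C * (nu (S i) / INR (S i))) by lra.
      apply Rmult_le_compat_r with (r := t) in H0; [|lra].
      rewrite Rinv_l in H0 by lra. lra. }
    pose proof (mseq_pos nu Wn i). pose proof (pow_lt _ i Hct).
    replace (mseq nu i * (nu (S i) / INR (S i)) * (C * t * (C * t) ^ i))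
      with ((mseq nu i * (C*t)^i) * (nu (S i) / INR (S i) * (C * t))) by ring.
    assert (0 < mseq nu i * (C*t)^i) by (apply Rmult_lt_0_compat; auto).
    nra. }
  assert (Hmono2 : forall d, a k0 <= a (k0 + d)%nat).
  { induction d. rewrite Nat.add_0_r; lra.
    rewrite Nat.add_succ_r. specialize (Hmono (k0 + d)%nat ltac:(lia)). lra. }
  assert (Hfin : forall n, exists k, (k <= n)%nat /\ forall j, (j <= n)%nat -> a k <= a j).
  { induction n. exists 0%nat. split; auto. intros j Hj. replace j with 0%nat by lia. lra.
    destruct IHn as [k [Hk Hj]]. destruct (Rle_or_lt (a k) (a (S n))).
    - exists k. split. lia. intros j Hj'. destruct (Nat.eq_dec j (S n)). subst; auto. apply Hj; lia.
    - exists (S n). split. lia. intros j Hj'. destruct (Nat.eq_dec j (S n)). subst; lra.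
      specialize (Hj j ltac:(lia)). lra. }
  destruct (Hfin k0) as [k1 [Hk1 Hk1m]].
  assert (Hglob : forall j, a k1 <= a j).
  { intro j. destruct (Nat.le_gt_cases j k0). auto.
    replace j with (k0 + (j - k0))%nat by lia. specialize (Hk1m k0 (le_n _)).
    specialize (Hmono2 (j - k0)%nat). lra. }
  destruct (min_exists (fun k => forall j, a k <= a j) k1 Hglob) as [k2 [Hk2 Hk2m]].
  assert (Hh : h_fun (mseq nu) (C * t) = a k2).
  { unfold h_fun.
    match goal with |- epsilon ?i ?P = _ =>
      assert (HP : P (epsilon i P)) by (apply epsilon_spec; exists (a k2); split; [exact Hk2| intros b Hb; apply Hb]) end.
    destruct HP as [H1 H2]. apply Rle_antisym. apply H1. apply H2. exact Hk2. }
  assert (Hg : (Gamma_bar (mseq nu) (C * t) <= k2)%nat).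
  { unfold Gamma_bar.
    match goal with |- (epsilon ?i ?P <= _)%nat =>
      assert (HP : P (epsilon i P)); [apply epsilon_spec | destruct HP as [_ H2]; apply H2; exact Hh] end.
    exists k2. split. exact Hh. intros j Hj. apply Hk2m. intro i.
    change (a j) with (mseq nu j * (C*t)^j). rewrite <- Hj, Hh. apply Hk2. }
  assert (k2 <= k1)%nat by (apply Hk2m; exact Hglob). lia.
Qed.
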